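(* Let $L\ge 1$, $N=2^L$, and let $\mathbb{F}_q$ be a finite field of odd characteristic. For $i\in\{1,\ldots,L\}$ let $\mathbf{V}_i$ be the $N\times\frac{N}{2}$ matrix whose columns are the elements of $\mathcal{V}_i=\left\{\prod_{s=1,s\ne i}^{L}\mathbf{X}_s^{x_s}\mathbf{w} : x_s\in\{0,1\}\right\}$. Then for any $i,j\in\{1,\ldots,L\}$, $$\mathrm{rank}\big([\mathbf{V}_i\ \ \mathbf{X}_j\mathbf{V}_i]\big)=\big|\mathcal{L}(\mathbf{V}_i)\cup\mathcal{L}(\mathbf{X}_j\mathbf{V}_i)\big|=\begin{cases}N,& i=j,\\ \frac{N}{2},& i\ne j.\end{cases}$$
   Context: $\mathbf{X}_s=\mathbf{I}_{2^{s-1}}\otimes\mathrm{blkdiag}\big(\mathbf{I}_{N/2^s},-\mathbf{I}_{N/2^s}\big)$ for $s\in\{1,\ldots,L\}$ (diagonal $N\times N$ with entries $\pm1$, so $\mathbf{X}_s^2=\mathbf{I}_N$ and the $\mathbf{X}_s$ commute); $\mathbf{w}$ is the all-ones vector of length $N$. Lattice representation: every matrix whose columns are vectors of the form $\prod_{s=1}^L\mathbf{X}_s^{x_s}\mathbf{w}$ with $(x_1,\ldots,x_L)\in\{0,1\}^L$ is mapped by $\mathcal{L}$ to the set of exponent vectors $(x_1,\ldots,x_L)$ of its columns (exponents taken mod $2$, since $\mathbf{X}_s^2=\mathbf{I}_N$). Thus $\mathcal{L}(\mathbf{X}_j\mathbf{V}_i)=\{x+e_j \bmod 2 : x\in\mathcal{L}(\mathbf{V}_i)\}$,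 with $e_j$ the $j$-th unit vector. *)

(* Defs.v *)
From HB Require Import structures.
From mathcomp Require Import all_boot all_order all_algebra all_field.
Set Implicit Arguments. Unset Strict Implicit. Unset Printing Implicit Defensive.
Import GRing.Theory Num.Theory.
Local Open Scope ring_scope.

(* Indices s : 'I_L are 0-based: X L s stands for the paper's X_{s+1}. *)
Section Defs.
Variable F : fieldType.

(* X_{s+1} = I_{2^s} (x) blkdiag(I_{N/2^{s+1}}, -I_{N/2^{s+1}}), N = 2^L:
   row r lies in a diagonal block of size 2b (b = N/2^{s+1}); its sign is -1
   iff r lies in the second half of that block. *)
Definition Xmx (L : nat) (s : 'I_L) : 'M[F]_(2 ^ L) :=
  let b := (2 ^ L %/ 2 ^ s.+1)%N in
  \matrix_(r, c) (if r == c then (if (b <= r %% (2 * b))%N then -1 else 1) else 0).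

Definition wvec (L : nat) : 'cV[F]_(2 ^ L) := const_mx 1.

Definition colvec (L : nat) (x : {ffun 'I_L -> bool}) : 'cV[F]_(2 ^ L) :=
  (\big[mulmx/1%:M]_(s < L) (if x s then Xmx s else 1%:M)) *m wvec L.

Definition lattice (L m : nat) (A : 'M[F]_(2 ^ L, m)) : {set {ffun 'I_L -> bool}} :=
  [set x | [exists c : 'I_m, col c A == colvec x]].

Definition mx_of_exps (L m : nat) (e : 'I_m -> {ffun 'I_L -> bool}) : 'M[F]_(2 ^ L, m) :=
  \matrix_(r, c) colvec (e c) r ord0.
End Defs.

(* Main.v *)
Require Import Defs.
From HB Require Import structures.
From mathcomp Require Import all_boot all_order all_algebra all_field zify.
Import GRing.Theory.

Definition bit k r := odd (r %/ 2 ^ k).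

Lemma expn_gt0' k : 0 < 2 ^ k. Proof. by rewrite expn_gt0. Qed.

Lemma bitD_same k r : bit k r = false -> bit k (r + 2^k) = true.
Proof.
rewrite /bit => h; rewrite addnC -{1}(mul1n (2^k)) divnMDl ?expn_gt0' //.
by rewrite oddD h.
Qed.

Lemma bitD_other k m r : m != k -> bit k r = false -> bit m (r + 2^k) = bit m r.
Proof.
rewrite /bit => hmk h.
case: (ltngtP m k) hmk => // hm _.
- have -> : 2 ^ k = 2 ^ (k - m) * 2 ^ m by rewrite -expnD subnK // ltnW.
  rewrite addnC divnMDl ?expn_gt0' // oddD oddX.
  have -> : (k - m == 0) = false by apply/negbTE; rewrite subn_eq0 -ltnNge.
  by [].
- have e : 2 ^ m = 2 ^ k * (2 * 2 ^ (m - k).-1).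
    by rewrite -expnS prednK ?subn_gt0 // -expnD subnKC // ltnW.
  rewrite e !divnMA addnC -{1}(mul1n (2^k)) divnMDl ?expn_gt0' //.
  set a := r %/ 2 ^ k in h *.
  have -> : (1 + a) %/ 2 = a %/ 2.
    have : a %% 2 = 0 by rewrite modn2 h.
    lia.
  by [].
Qed.

Lemma cond_bit k r : (2^k <= r %% (2 * 2^k)) = bit k r.
Proof.
rewrite /bit.
have hP := expn_gt0' k.
set P := 2 ^ k in hP *.
have er : r = (r %/ P %/ 2) * (2 * P) + ((r %/ P %% 2) * P + r %% P).
  rewrite {1}(divn_eq r P) {1}(divn_eq (r %/ P) 2). lia.
have hu : r %% P < P by rewrite ltn_mod.
rewrite {1}er modnMDl modn_small.
  rewrite modn2; case: (odd (r %/ P)) => /=; lia.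
rewrite modn2; case: (odd (r %/ P)) => /=; lia.
Qed.

Lemma bit_sub k r : bit k r = true -> 2 ^ k <= r /\ bit k (r - 2^k) = false /\ r - 2^k + 2^k = r.
Proof.
rewrite /bit => h.
have hP := expn_gt0' k.
have hle : 2 ^ k <= r.
  case: (leqP (2^k) r) => // /divn_small hr; by rewrite hr in h.
split=> //; split; last by rewrite subnK.
have e : r = (r - 2^k) + 1 * 2^k by rewrite mul1n subnK.
move: h; rewrite {1}e addnC divnMDl // oddD /=. by case: odd.
Qed.

Lemma bit_lt k L r : k < L -> r < 2 ^ L -> bit k r = false -> r + 2 ^ k < 2 ^ L.
Proof.
rewrite /bit => hk hr h.
have hP := expn_gt0' k.
have eL : 2 ^ L = 2 ^ (L - k) * 2 ^ k by rewrite -expnD subnK // ltnW.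
have hq : r %/ 2 ^ k < 2 ^ (L - k) by rewrite ltn_divLR // -eL.
have ev : ~~ odd (2 ^ (L - k)).
  rewrite oddX subn_eq0 /= negb_or; apply/andP; split=> //; by rewrite -ltnNge.
have hq1 : (r %/ 2 ^ k).+1 < 2 ^ (L - k).
  rewrite ltn_neqAle hq andbT; apply/eqP => e; by rewrite -e /= h in ev.
rewrite eL {1}(divn_eq r (2^k)).
have hu : r %% 2 ^ k < 2 ^ k by rewrite ltn_mod.
have h2 : (r %/ 2 ^ k).+2 * 2 ^ k <= 2 ^ (L - k) * 2 ^ k by rewrite leq_mul2r hq1 orbT.
move: h2 hu; rewrite !mulSn. lia.
Qed.

Local Open Scope ring_scope.
Section Alg.
Variable F : fieldType.
Variable L : nat.

Definition kk (t : 'I_L) := (L - t.+1)%N.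
Definition sg (k r : nat) : F := if bit k r then -1 else 1.
Definition chi (x : {ffun 'I_L -> bool}) (r : nat) : F :=
  \prod_(t < L) (if x t then sg (kk t) r else 1).
Definition flip (j : 'I_L) (x : {ffun 'I_L -> bool}) : {ffun 'I_L -> bool} :=
  [ffun t => if t == j then ~~ x t else x t].

Lemma kk_lt t : (kk t < L)%N.
Proof. rewrite /kk; have := ltn_ord t; lia. Qed.

Lemma kk_inj : injective kk.
Proof. move=> s t; rewrite /kk => h; apply/val_inj => /=; have := ltn_ord s; have := ltn_ord t; lia. Qed.

Lemma Xmx_E t (r c : 'I_(2 ^ L)) : Xmx F t r c = (r == c)%:R * sg (kk t) r.
Proof.
rewrite mxE.
have -> : (2 ^ L %/ 2 ^ t.+1)%N = (2 ^ kk t)%N by rewrite /kk expnB // ltn_ord.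
rewrite cond_bit /sg.
by case: (r == c); rewrite ?mul1r ?mul0r.
Qed.

Lemma diag_mul n m (A : 'M[F]_n) (B : 'M[F]_(n, m)) a :
  (forall r k, A r k = (r == k)%:R * a r) -> forall r c, (A *m B) r c = a r * B r c.
Proof.
move=> hA r c; rewrite mxE (bigD1 r) //= big1 ?addr0.
  by rewrite hA eqxx mul1r.
by move=> k hk; rewrite hA eq_sym (negbTE hk) mul0r mul0r.
Qed.

Lemma colvecE x (r : 'I_(2 ^ L)) : colvec F x r ord0 = chi x r.
Proof.
have key : forall (s : seq 'I_L) (r c : 'I_(2 ^ L)),
  (\big[mulmx/1%:M]_(t <- s) (if x t then Xmx F t else 1%:M)) r c
  = (r == c)%:R * \prod_(t <- s) (if x t then sg (kk t) r else 1).
  elim=> [|t s IH] r0 c0.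
    by rewrite !big_nil mxE mulr1.
  rewrite !big_cons (@diag_mul _ _ _ _ (fun r => if x t then sg (kk t) r else 1)).
    by rewrite IH mulrCA.
  move=> r1 k; case: (x t); first exact: Xmx_E.
  by rewrite mxE mulr1.
rewrite /colvec mxE (bigD1 r) //= big1 ?addr0.
  by rewrite key eqxx mul1r mxE mulr1.
by move=> k hk; rewrite key eq_sym (negbTE hk) mul0r mul0r.
Qed.

Lemma sg_sq k r : sg k r * sg k r = 1.
Proof. by rewrite /sg; case: bit; rewrite ?mulN1r ?opprK ?mulr1. Qed.

Lemma chi_flip j x r : chi (flip j x) r = sg (kk j) r * chi x r.
Proof.
rewrite /chi (bigD1 j) //= [in RHS](bigD1 j) //= ffunE eqxx.
rewrite (eq_bigr (fun t => if x t then sg (kk t) r else 1)); last first.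
  by move=> t ht; rewrite ffunE (negbTE ht).
rewrite mulrA; congr (_ * _).
by case: (x j) => /=; rewrite ?mulr1 ?sg_sq.
Qed.

Definition xorf (x y : {ffun 'I_L -> bool}) : {ffun 'I_L -> bool} := [ffun t => x t != y t].

Lemma chi_mul x y r : chi x r * chi y r = chi (xorf x y) r.
Proof.
rewrite /chi -big_split /=; apply: eq_bigr => t _; rewrite ffunE.
by case: (x t); case: (y t); rewrite /= ?mulr1 ?mul1r ?sg_sq.
Qed.

Lemma chi0 r : chi [ffun => false] r = 1.
Proof. by rewrite /chi big1 // => t _; rewrite ffunE. Qed.

Lemma two_nz (hF : (2 \notin [pchar F])%N) : (2%:R : F) != 0.
Proof. by move: hF; rewrite inE /=. Qed.

Lemma N_nz (hF : (2 \notin [pchar F])%N) : ((2 ^ L)%:R : F) != 0.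
Proof. by rewrite natrX expf_neq0 // two_nz. Qed.

Definition phi k r := if bit k r then (r - 2 ^ k)%N else (r + 2 ^ k)%N.

Lemma phi_lt {k r} : (k < L)%N -> (r < 2 ^ L)%N -> (phi k r < 2 ^ L)%N.
Proof.
rewrite /phi => hk hr; case h: (bit k r).
  exact: leq_ltn_trans (leq_subr _ _) hr.
exact: bit_lt.
Qed.

Lemma phiK k r : phi k (phi k r) = r.
Proof.
rewrite /phi; case h: (bit k r).
  by have [_ [-> ->]] := bit_sub _ _ h.
by rewrite bitD_same // addnK.
Qed.

Lemma bit_phi k m r : bit m (phi k r) = if m == k then ~~ bit k r else bit m r.
Proof.
rewrite /phi; case h: (bit k r).
  have [_ [h1 h2]] := bit_sub _ _ h.
  case: eqP => [->|hmk]; first by rewrite h1.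
  by rewrite -{2}h2 bitD_other //; apply/eqP.
case: eqP => [->|hmk]; first by rewrite bitD_same.
by rewrite bitD_other //; apply/eqP.
Qed.

Lemma sum_chi0 (hF : (2 \notin [pchar F])%N) {z} : z != [ffun => false] ->
  \sum_(r < 2 ^ L) chi z r = 0.
Proof.
move=> hz.
have [s hs] : exists s, z s.
  apply/existsP; apply: contraR hz; rewrite negb_exists => /forallP h.
  by apply/eqP/ffunP => t; rewrite ffunE; apply/negbTE.
set k := kk s.
pose p (r : 'I_(2 ^ L)) : 'I_(2 ^ L) := Ordinal (phi_lt (kk_lt s) (ltn_ord r)).
have pinj : injective p.
  move=> a b /(congr1 val) /= /(congr1 (phi k)); rewrite !phiK => h; exact: val_inj.
have hneg : forall r, chi z (p r) = - chi z r.
  move=> r; rewrite /chi /= (bigD1 s) //= [in RHS](bigD1 s) //= hs.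
  rewrite -mulNr; congr (_ * _).
    by rewrite /sg bit_phi eqxx; case: bit; rewrite ?opprK.
  apply: eq_bigr => t ht; rewrite /sg bit_phi.
  have -> : (kk t == k) = false by apply/negbTE; apply: contra ht => /eqP /kk_inj ->.
  by [].
set S := \sum_(r < 2 ^ L) chi z r.
have : S = - S.
  rewrite {1}/S (reindex_inj pinj) /= -sumrN; apply: eq_bigr => r _; exact: hneg.
move/eqP; rewrite -subr_eq0 opprK -mulr2n -mulr_natr mulf_eq0 (negbTE (two_nz hF)) orbF.
by move/eqP.
Qed.

Lemma xorf_same x : xorf x x = [ffun => false].
Proof. by apply/ffunP => t; rewrite !ffunE eqxx. Qed.

Lemma sum_chi_sq x : \sum_(r < 2 ^ L) chi x r * chi x r = (2 ^ L)%:R.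
Proof.
under eq_bigr => r _ do rewrite chi_mul xorf_same chi0.
by rewrite sumr_const card_ord.
Qed.

Lemma xorf_nz x y : x != y -> xorf x y != [ffun => false].
Proof.
apply: contraR; rewrite negbK => /eqP h; apply/eqP/ffunP => t.
by have := congr1 (fun g : {ffun 'I_L -> bool} => g t) h; rewrite !ffunE; case: (x t); case: (y t).
Qed.

Definition mkA {m} (f : 'I_m -> {ffun 'I_L -> bool}) : 'M[F]_(2 ^ L, m) :=
  \matrix_(r, c) chi (f c) r.

Lemma rank_chi (hF : (2 \notin [pchar F])%N) m (f : 'I_m -> {ffun 'I_L -> bool}) :
  injective f -> \rank (mkA f) = m.
Proof.
move=> finj.
apply/eqP; rewrite eqn_leq rank_leq_col /=.
have hG : (mkA f)^T *m mkA f = (2 ^ L)%:R%:M.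
  apply/matrixP => a b; rewrite !mxE.
  under eq_bigr => r _ do rewrite !mxE chi_mul.
  case: (eqVneq a b) => [->|hab].
    by under eq_bigr => r _ do rewrite xorf_same chi0; rewrite sumr_const card_ord mulr1n.
  rewrite sum_chi0 ?mulr0n //; apply: xorf_nz.
  by apply: contra hab => /eqP /finj ->.
have : \rank ((mkA f)^T *m mkA f) = m.
  by rewrite hG -scalemx1 mxrank_scale_nz ?N_nz // mxrank1.
move=> h; have := mxrankM_maxr (mkA f)^T (mkA f); by rewrite h.
Qed.

Lemma colvec_inj (hF : (2 \notin [pchar F])%N) (x y : {ffun 'I_L -> bool}) : colvec F x = colvec F y -> x = y.
Proof.
move=> h; apply/eqP; apply: contraT => hxy.
have := sum_chi0 hF (xorf_nz _ _ hxy).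
under eq_bigr => r _ do rewrite -chi_mul -[chi y r]colvecE -h colvecE.
by rewrite sum_chi_sq => /eqP; rewrite (negbTE (N_nz hF)).
Qed.

Lemma flipK j : cancel (flip j) (flip j).
Proof.
by move=> x; apply/ffunP => t; rewrite !ffunE; case: eqP => // _; rewrite negbK.
Qed.

End Alg.
Arguments flip {L}.
Arguments kk {L}.
Arguments flipK {L}.
Arguments colvec_inj {F L} hF {x y}.
Arguments rank_chi {F L} hF {m f}.

Theorem lemma2 (F : finFieldType) (hF : (2 \notin [pchar F])%N) (L : nat) (hL : (1 <= L)%N)
  (i j : 'I_L) (e : 'I_(2 ^ L %/ 2) -> {ffun 'I_L -> bool})
  (he_inj : injective e) (he_i : forall c, e c i = false) :
  let V := mx_of_exps F e in
  let XV := Xmx F j *m V in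
  \rank (row_mx V XV) = #|lattice V :|: lattice XV| /\
  #|lattice V :|: lattice XV| = (if i == j then 2 ^ L else 2 ^ L %/ 2)%N.
Proof.
move=> V XV.
set N2 := (2 ^ L %/ 2)%N.
have hN : (N2 + N2 = 2 ^ L)%N.
  rewrite /N2 -(subnK hL) expnD expn1 mulnK //; lia.
set S := [set x : {ffun 'I_L -> bool} | ~~ x i].
have cardS : #|S| = N2.
  have hC : ~: S = [set flip i x | x in S].
    rewrite (can2_imset_pre _ (flipK i) (flipK i)); apply/setP => x.
    by rewrite !inE ffunE eqxx negbK.
  have := cardsC S; rewrite hC card_imset; last exact: can_inj (flipK i).
  rewrite card_ffun card_bool card_ord => h; lia.
have surj : forall x, x \in S -> exists c, e c = x.
  have hsub : e @: [set: 'I_N2] \subset S.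
    by apply/subsetP => x /imsetP [c _ ->]; rewrite inE he_i.
  have hcard : #|e @: [set: 'I_N2]| = #|S| by rewrite card_imset // cardsT card_ord cardS.
  have heq := elimT (subset_cardP hcard) hsub.
  move=> x; rewrite -heq => /imsetP [c _ ->]; by exists c.
have VE : forall r c, V r c = chi F L (e c) r by move=> r c; rewrite mxE colvecE.
have XVE : forall r c, XV r c = chi F L (flip j (e c)) r.
  move=> r c; rewrite (@diag_mul F _ _ _ _ (sg F (kk j))); last exact: Xmx_E.
  by rewrite VE chi_flip.
have colV : forall c, col c V = colvec F (e c).
  by move=> c; apply/matrixP => r k; rewrite (ord1 k) mxE VE colvecE.
have colXV : forall c, col c XV = colvec F (flip j (e c)).
  by move=> c; apply/matrixP => r k; rewrite (ord1 k) mxE XVE colvecE.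
have latV : lattice V = S.
  apply/setP => x; rewrite !inE; apply/existsP/idP.
    by case=> c /eqP; rewrite colV => /(colvec_inj hF) <-; rewrite he_i.
  move=> hx; have hxS : x \in S by rewrite inE.
  have [c hc] := surj x hxS; exists c; by rewrite colV hc.
have latXV : lattice XV = [set x | ~~ flip j x i].
  apply/setP => x; rewrite !inE; apply/existsP/idP.
    case=> c /eqP; rewrite colXV => /(colvec_inj hF) <-; by rewrite flipK he_i.
  move=> hx; have [c hc] : exists c, e c = flip j x by apply: surj; rewrite inE.
  by exists c; rewrite colXV hc flipK.
have hcard : #|lattice V :|: lattice XV| = (if i == j then 2 ^ L else N2)%N.
  rewrite latV latXV; case: eqP => [<-|hij].
    have -> : S :|: [set x | ~~ flip i x i] = setT.
      by apply/setP => x; rewrite !inE ffunE eqxx negbK orNb.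
    by rewrite cardsT card_ffun card_bool card_ord.
  have -> : S :|: [set x | ~~ flip j x i] = S.
    apply/setP => x; rewrite !inE ffunE.
    have -> : (i == j) = false by apply/eqP.
    by rewrite orbb.
  exact: cardS.
split; last exact: hcard.
rewrite hcard.
have rV : \rank V = N2.
  have -> : V = mkA F L e by apply/matrixP => r c; rewrite VE mxE.
  exact: rank_chi.
case: eqP => [eij|hij].
  subst j.
  pose f (c : 'I_(N2 + N2)) := match split c with inl a => e a | inr b => flip i (e b) end.
  have -> : row_mx V XV = mkA F L f.
    apply/matrixP => r c; rewrite !mxE /f; case: (split c) => a.
      by rewrite VE.
    by rewrite XVE.
  rewrite rank_chi ?hN //.
  move=> a b h; rewrite -(splitK a) -(splitK b); move: h; rewrite /f.
  case: (split a) => a'; case: (split b) => b' h.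
  - by rewrite (he_inj _ _ h).
  - by have := congr1 (fun g : {ffun 'I_L -> bool} => g i) h; rewrite ffunE eqxx he_i he_i.
  - by have := congr1 (fun g : {ffun 'I_L -> bool} => g i) h; rewrite ffunE eqxx he_i he_i.
  - by rewrite (he_inj _ _ (can_inj (flipK i) h)).
have [g hg] : exists g : 'I_N2 -> 'I_N2, forall b, e (g b) = flip j (e b).
  exists (fun b => odflt b [pick a | e a == flip j (e b)]) => b.
  case: pickP => [a /eqP //|] /= h.
  have [c hc] : exists c, e c = flip j (e b).
    apply: surj; rewrite inE ffunE.
    have -> : (i == j) = false by apply/eqP.
    by rewrite he_i.
  by have := h c; rewrite hc eqxx.
pose P : 'M[F]_(N2, N2) := \matrix_(a, b) (a == g b)%:R.
apply/eqP; rewrite eqn_leq; apply/andP; split.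
  have -> : row_mx V XV = V *m row_mx 1%:M P.
    rewrite mul_mx_row mulmx1; congr row_mx.
    apply/matrixP => r b; rewrite XVE mxE (bigD1 (g b)) //= big1 ?addr0.
      by rewrite VE /P mxE eqxx mulr1 hg.
    by move=> a ha; rewrite [P _ _]mxE (negbTE ha) mulr0.
  by apply: leq_trans (mxrankM_maxl _ _) _; rewrite rV.
have := mxrankM_maxl (row_mx V XV) (col_mx 1%:M (0 : 'M[F]_(N2, N2))).
by rewrite mul_row_col mulmx1 mulmx0 addr0 rV.
Qed.
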